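(* Let $n>s\ge1$ be integers and ${\bm v}=(v_0,\dots,v_s)\in\mathbb{R}^{s+1}$. Let $f_{\bm v}(t;x)=x^n+t\sum_{k=0}^sv_kx^k$, $P_{\bm v}(t)=\det M_n(f_{\bm v}(t;x),f'_{\bm v}(t;x))\in\mathbb{R}[t]$ (derivative in $x$), assumed not identically zero, and $\alpha_{\bm v}=\max\{\alpha\in\mathbb{R}\mid P_{\bm v}(\alpha)=0\}$. Suppose there exist an integer $\gamma_0$ and a real $\rho_0>\alpha_{\bm v}$ such that $N_{f_{\bm v}(\xi;x)}=\gamma_0$ for all $\xi>\rho_0$. Then $N_{f_{\bm v}(\xi;x)}=\gamma_0$ for all $\xi>\alpha_{\bm v}$.
   Context: Bezoutian: for polynomials $f_1,f_2$ over a field $F$ of characteristic $0$ and an integer $n\ge\max\{\deg f_1,\deg f_2\}$, write $\frac{f_1(x)f_2(y)-f_1(y)f_2(x)}{x-y}=\sum_{i,j=1}^n\alpha_{ij}x^{n-i}y^{n-j}\in F[x,y]$ and set $M_n(f_1,f_2)=(\alpha_{ij})_{1\le i,j\le n}$. $N_h$ is the number of distinct real roots of a real polynomial $h$. Note $P_{\bm v}(0)=0$ since $f_{\bm v}(0;x)=x^n$. *)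

(* Defs.v *)
From HB Require Import structures.
From mathcomp Require Import all_boot all_order all_algebra.
Set Implicit Arguments. Unset Strict Implicit. Unset Printing Implicit Defensive.
Import Order.TTheory GRing.Theory Num.Theory.
Local Open Scope ring_scope.

(* The bivariate polynomial (f1(x) f2(y) - f1(y) f2(x)) / (x - y), represented in
   {poly {poly A}}: the outer variable is x, the inner variable is y.
   The division is exact (divisor monic in x). *)
Definition bezout_poly (A : idomainType) (f1 f2 : {poly A}) : {poly {poly A}} :=
  (map_poly polyC f1 * f2%:P - f1%:P * map_poly polyC f2) %/ ('X - ('X)%:P).

(* M_n(f1,f2) = (alpha_ij)_{1<=i,j<=n}, where alpha_ij is the coefficient of
   x^(n-i) y^(n-j).  Ordinal i : 'I_n stands for index i+1. *)
Definition bezout_mx (A : idomainType) (n : nat) (f1 f2 : {poly A}) : 'M[A]_n :=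
  \matrix_(i < n, j < n) ((bezout_poly f1 f2)`_(n - i.+1))`_(n - j.+1).

(* f_v(t;x) = x^n + t * sum_{k=0}^s v_k x^k, as a polynomial in x whose
   coefficients are polynomials in t. *)
Definition fv (R : rcfType) (n s : nat) (v : 'I_s.+1 -> R) : {poly {poly R}} :=
  'X^n + \sum_(k < s.+1) ((v k)%:P * 'X)%:P * 'X^k.

Definition fv_at (R : rcfType) (n s : nat) (v : 'I_s.+1 -> R) (xi : R) : {poly R} :=
  map_poly (fun p : {poly R} => p.[xi]) (fv n v).

Definition Pv (R : rcfType) (n s : nat) (v : 'I_s.+1 -> R) : {poly R} :=
  \det (bezout_mx n (fv n v) (fv n v)^`()).

Definition num_real_roots_eq (R : rcfType) (h : {poly R}) (m : nat) : Prop :=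
  exists r : seq R, [/\ uniq r, (forall x, root h x = (x \in r)) & size r = m].

(* Main.v *)
Require Import Defs.
From HB Require Import structures.
From mathcomp Require Import all_boot all_order all_algebra.
From mathcomp Require Import polyorder polyrcf.
From mathcomp Require Import ring lra zify.
Import Order.TTheory GRing.Theory Num.Theory.
Set Implicit Arguments. Unset Strict Implicit.
Local Open Scope ring_scope.
Local Notation noroot p := (forall x, ~~ root p x).

Section Signs.
Variable R : rcfType.
Implicit Types p : {poly R}.

Lemma sign_right p x w : x < w -> root p x -> p^`().[x] != 0 ->
  {in `]x, w], noroot p} -> Num.sg p.[w] = Num.sg p^`().[x].
Proof.
move=> xw rx d0 nr.
have p0 : p != 0 by apply: contraNneq d0 => ->; rewrite derivC horner0.
have [m hm] := neighpr_wit xw p0.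
have hmi : m \in `]x, w].
  move: hm (next_root_in p x w); rewrite /neighpr !in_itv /= => /andP[h1 h2] /andP[_ h3].
  have e : Num.max w x = w by apply/max_idPl; exact: ltW.
  rewrite e in h3; rewrite h1 /=; exact: (le_trans (ltW h2) h3).
rewrite (@polyrN0_itv _ `]x, w] p nr m w hmi); last by rewrite in_itv /= xw lexx.
rewrite (sgr_neighpr hm) (sgp_right_deriv rx) sgp_rightNroot //.
Qed.

Lemma sign_left p x w : w < x -> root p x -> p^`().[x] != 0 ->
  {in `[w, x[, noroot p} -> Num.sg p.[w] = - Num.sg p^`().[x].
Proof.
move=> wx rx d0 nr.
have p0 : p != 0 by apply: contraNneq d0 => ->; rewrite derivC horner0.
have [m hm] := neighpl_wit wx p0.
have hmi : m \in `[w, x[.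
  move: hm (prev_root_in p w x); rewrite /neighpl !in_itv /= => /andP[h1 h2] /andP[h3 _].
  have e : Num.min w x = w by apply/min_idPl; exact: ltW.
  rewrite e in h3; rewrite h2 andbT; exact: (le_trans h3 (ltW h1)).
rewrite (@polyrN0_itv _ `[w, x[ p nr m w hmi); last by rewrite in_itv /= wx lexx.
rewrite (sgr_neighpl hm) (sgp_right_deriv rx) sgp_rightNroot //.
have mu1 : \mu_x p = 1%N.
  have h1 := mu_deriv rx. rewrite muNroot // in h1.
  have h2 : (0 < \mu_x p)%N by rewrite mu_gt0.
  by case: (\mu_x p) h1 h2 => [|[|k]].
by rewrite mu1 /= expr1 mulN1r.
Qed.

End Signs.

Section Abstract.
Variable R : rcfType.
Variables (a q : {poly R}) (alpha : R).
Hypothesis qa_cop : forall z, root q z -> ~~ root a z.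
Hypothesis size_qa : (size q < size a)%N.
Definition G (t : R) := a + t *: q.
Hypothesis Hdbl : forall t z, root (G t) z -> root (G t)^`() z -> t <= alpha.
Definition D := a^`() * q - a * q^`().
Definition E := D * q.
Hypothesis EN0 : E != 0.

Lemma sizeG t : size (G t) = size a.
Proof. by rewrite /G size_polyDl // (leq_ltn_trans (size_scale_leq _ _)). Qed.
Lemma leadG t : lead_coef (G t) = lead_coef a.
Proof. by rewrite /G lead_coefDl // (leq_ltn_trans (size_scale_leq _ _)). Qed.
Lemma GN0 t : G t != 0.
Proof. by rewrite -size_poly_eq0 sizeG size_poly_eq0; apply: contraTneq size_qa => ->; rewrite size_poly0. Qed.

Lemma DG t : D = (G t)^`() * q - G t * q^`().
Proof. rewrite /D /G derivD derivZ -!mul_polyC; ring. Qed.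

Lemma DGx t z : root (G t) z -> D.[z] = (G t)^`().[z] * q.[z].
Proof. by move=> /rootP r; rewrite (DG t) hornerD hornerN !hornerM r mul0r subr0. Qed.

Lemma GD t t' : G t' = G t + (t' - t) *: q.
Proof. rewrite /G scalerBl; ring. Qed.

Lemma Esign t z : root E z -> alpha < t ->
  (G t).[z] != 0 /\ Num.sg (G t).[z] = (if q.[z] == 0 then Num.sg a.[z] else Num.sg q.[z]).
Proof.
move=> /rootP Ez hat.
have Gz : (G t).[z] = a.[z] + t * q.[z] by rewrite /G !hornerE.
case: (eqVneq q.[z] 0) => [q0|q0].
  have na : ~~ root a z by apply: qa_cop; exact/rootP.
  by rewrite Gz q0 mulr0 addr0; split.
have Dz : D.[z] = 0.
  by move: Ez; rewrite /E hornerM => /eqP; rewrite mulf_eq0 (negPf q0) orbF => /eqP.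
set ts := - a.[z] / q.[z].
have Gts : root (G ts) z.
  by apply/rootP; rewrite /G !hornerE /ts; field.
have Gts' : root (G ts)^`() z.
  apply/rootP; move: (@DGx ts z Gts); rewrite Dz => /esym/eqP.
  by rewrite mulf_eq0 (negPf q0) orbF => /eqP.
have tsa := Hdbl Gts Gts'.
have e : (G t).[z] = (t - ts) * q.[z].
  by rewrite Gz /ts; field.
have tt : 0 < t - ts by rewrite subr_gt0; exact: le_lt_trans tsa hat.
split; first by rewrite e mulf_neq0 // gt_eqF.
by rewrite e sgrM gtr0_sg // mul1r.
Qed.

Definition btw (x y z : R) := ((x <= z) && (z <= y)) || ((y <= z) && (z <= x)).

Lemma AMO t x1 x2 : alpha < t -> x1 < x2 -> root (G t) x1 -> root (G t) x2 ->
  (forall z, x1 <= z -> z <= x2 -> ~~ root E z) -> False.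
Proof.
move=> hat x12 r1 r2 nE.
set g := G t.
have [y [y12 ry nry]] : exists y, [/\ x1 < y <= x2, root g y & {in `]x1, y[, noroot g}].
  case: (next_rootP g x1 x2).
  - by move=> g0; move: (GN0 t); rewrite -/g g0 eqxx.
  - move=> y _ gy hy nr; exists y; split; last exact: nr.
      by move: hy; rewrite in_itv /= => /andP[-> /ltW].
    exact/rootP.
  - move=> c _ hc nr; exists x2; split; [by rewrite x12 lexx | exact: r2 | exact: nr].
have d1 : g^`().[x1] != 0.
  by apply/negP => /rootP/eqP h; move: (Hdbl r1 h); rewrite leNgt hat.
have d2 : g^`().[y] != 0.
  by apply/negP => /rootP/eqP h; move: (Hdbl ry h); rewrite leNgt hat.
case/andP: y12 => x1y yx2.
set m := (x1 + y) / 2.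
have x1m : x1 < m by rewrite /m; lra.
have my : m < y by rewrite /m; lra.
have s1 : Num.sg g.[m] = Num.sg g^`().[x1].
  apply: sign_right => // z; rewrite in_itv /= => /andP[h1 h2].
  by apply: nry; rewrite in_itv /= h1 /=; exact: le_lt_trans h2 my.
have s2 : Num.sg g.[m] = - Num.sg g^`().[y].
  apply: sign_left => // z; rewrite in_itv /= => /andP[h1 h2].
  by apply: nry; rewrite in_itv /= h2 andbT; exact: lt_le_trans x1m h1.
have nq : {in `[x1, x2], noroot q}.
  move=> z; rewrite in_itv /= => /andP[h1 h2]; apply: contra (nE z h1 h2).
  by move=> /rootP rq; apply/rootP; rewrite /E hornerM rq mulr0.
have sq : Num.sg q.[y] = Num.sg q.[x1].
  apply: (polyrN0_itv nq); rewrite in_itv /= ?lexx ?(ltW x12) //.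
  by rewrite (ltW x1y).
have q1 : q.[x1] != 0.
  by apply: (nq x1); rewrite in_itv /= lexx (ltW x12).
have : D.[x1] * D.[y] < 0.
  rewrite -sgr_cp0 sgrM (@DGx t _ r1) (@DGx t _ ry) !sgrM sq -s1 s2.
  have h1 : Num.sg q.[x1] * Num.sg q.[x1] = 1.
    by rewrite -sgrM gtr0_sg // -expr2 exprn_even_gt0.
  have h2 : Num.sg g^`().[y] * Num.sg g^`().[y] = 1.
    by rewrite -sgrM gtr0_sg // -expr2 exprn_even_gt0.
  apply/eqP; transitivity (- ((Num.sg g^`().[y] * Num.sg g^`().[y]) * (Num.sg q.[x1] * Num.sg q.[x1]))).
    by rewrite -/g; ring.
  by rewrite h1 h2 mulr1.
move=> /ltW /(polyrcf.poly_ivt (ltW x1y)) [z hz /rootP rz].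
move: hz; rewrite in_itv /= => /andP[h1 h2].
by move: (nE z h1 (le_trans h2 yx2)); rewrite /E rootE hornerM rz mul0r eqxx.
Qed.


Lemma sgr_sq (u : R) : u != 0 -> Num.sg u * Num.sg u = 1.
Proof. by move=> u0; rewrite -sgrM gtr0_sg // -expr2 exprn_even_gt0. Qed.

Lemma right_end t t' x : alpha < t -> alpha < t' -> exists w,
  [/\ x < w, (forall z, x < z -> z < w -> ~~ root E z), (G t).[w] != 0 &
      Num.sg (G t').[w] = Num.sg (G t).[w]].
Proof.
move=> ht ht'.
set B := 1 + `|x| + cauchy_bound E + cauchy_bound (G t) + cauchy_bound (G t').
have c1 := cauchy_bound_ge0 E; have c2 := cauchy_bound_ge0 (G t);
have c3 := cauchy_bound_ge0 (G t'); have c4 := ler_norm x.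
have c5 := normr_ge0 x.
have xB : x < B by rewrite /B; lra.
case: (next_rootP E x B).
- by move=> e0; move: EN0; rewrite e0 eqxx.
- move=> y _ Ey hy nr; exists y; move: hy; rewrite in_itv /= => /andP[xy _].
  have rEy : root E y by exact/rootP.
  have [n1 s1] := Esign rEy ht; have [_ s2] := Esign rEy ht'.
  split=> //; last by rewrite s1 s2.
  by move=> z h1 h2; apply: nr; rewrite in_itv /= h1 h2.
- move=> c _ hc nr; exists B; split=> //.
  + by move=> z h1 h2; apply: nr; rewrite in_itv /= h1 h2.
  + have := ge_cauchy_bound (GN0 t) (x:=B); rewrite in_itv /= andbT.
    by move=> /(_ _) h; apply: h; rewrite /B; lra.
  + have hB : forall u, B \in `[cauchy_bound (G u), +oo[ -> Num.sg (G u).[B] = Num.sg (lead_coef a).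
      by move=> u hu; rewrite (sgp_pinftyP (ge_cauchy_bound (GN0 u)) hu) /sgp_pinfty leadG.
    by rewrite !hB // in_itv /= andbT /B; lra.
Qed.

Lemma left_end t t' x : alpha < t -> alpha < t' -> exists w,
  [/\ w < x, (forall z, w < z -> z < x -> ~~ root E z), (G t).[w] != 0 &
      Num.sg (G t').[w] = Num.sg (G t).[w]].
Proof.
move=> ht ht'.
set B := 1 + `|x| + cauchy_bound E + cauchy_bound (G t) + cauchy_bound (G t').
have c1 := cauchy_bound_ge0 E; have c2 := cauchy_bound_ge0 (G t);
have c3 := cauchy_bound_ge0 (G t'); have c4 : - x <= `|x| by rewrite -normrN ler_norm.
have c5 := normr_ge0 x.
have xB : - B < x by rewrite /B; lra.
case: (prev_rootP E (- B) x).
- by move=> e0; move: EN0; rewrite e0 eqxx.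
- move=> y _ Ey hy nr; exists y; move: hy; rewrite in_itv /= => /andP[_ xy].
  have rEy : root E y by exact/rootP.
  have [n1 s1] := Esign rEy ht; have [_ s2] := Esign rEy ht'.
  split=> //; last by rewrite s1 s2.
  by move=> z h1 h2; apply: nr; rewrite in_itv /= h1 h2.
- move=> c _ hc nr; exists (- B); split=> //.
  + by move=> z h1 h2; apply: nr; rewrite in_itv /= h1 h2.
  + have := le_cauchy_bound (GN0 t) (x:=-B); rewrite in_itv /=.
    by move=> /(_ _) h; apply: h; rewrite /B lerN2; lra.
  + have hB : forall u, - B \in `]-oo, - cauchy_bound (G u)] ->
        Num.sg (G u).[- B] = Num.sg ((-1) ^+ (size a).-1 * lead_coef a).
      by move=> u hu; rewrite (sgp_minftyP (le_cauchy_bound (GN0 u)) hu) /sgp_minfty leadG sizeG.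
    by rewrite !hB // in_itv /= /B lerN2; lra.
Qed.

Lemma EX t t' x : alpha < t -> alpha < t' -> root (G t) x ->
  exists y, root (G t') y /\ (forall z, btw x y z -> ~~ root E z).
Proof.
move=> ht ht' rx.
set g := G t; set H := G t'.
have qx : q.[x] != 0.
  apply/negP => /eqP q0.
  have na : ~~ root a x by apply: qa_cop; exact/rootP.
  by move: na rx; rewrite /g /G !rootE !hornerE q0 mulr0 addr0 => /negP.
have dx : g^`().[x] != 0.
  by apply/negP => /rootP/eqP h; move: (Hdbl rx h); rewrite leNgt ht.
have Ex : ~~ root E x.
  by rewrite rootE /E hornerM (@DGx t x rx) !mulf_neq0.
have [e|tt] := eqVneq t' t.
  exists x; split; first by rewrite /H e.
  move=> z; rewrite /btw => /orP[] /andP[h1 h2];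
    by have -> : z = x by apply/eqP; rewrite eq_le ?h1 ?h2.
have Hx : H.[x] = (t' - t) * q.[x].
  by rewrite /H (GD t t') hornerD (rootP rx) add0r hornerZ.
have Hx0 : H.[x] != 0 by rewrite Hx mulf_neq0 // subr_eq0.
have prod0 : H.[x] * g^`().[x] != 0 by rewrite mulf_neq0.
case: (ltgtP (H.[x] * g^`().[x]) 0) prod0 => // hs _.
-
  have [w [xw nrE gw sHw]] := right_end x ht ht'.
  have nEc : forall z, x <= z -> z < w -> ~~ root E z.
    move=> z; rewrite le_eqVlt => /orP[/eqP <- //|] h1 h2; exact: nrE.
  have nrg : {in `]x, w], noroot g}.
    move=> z; rewrite in_itv /= => /andP[h1 h2].
    move: h2; rewrite le_eqVlt => /orP[/eqP ->|h2]; first by rewrite rootE.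
    apply/negP => rz; apply: (AMO ht h1 rx rz) => u hu1 hu2.
    by apply: nEc => //; exact: le_lt_trans hu2 h2.
  have sgw := sign_right xw rx dx nrg.
  have : H.[x] * H.[w] < 0.
    by rewrite -sgr_cp0 sgrM sHw -/g sgw -sgrM sgr_cp0.
  move=> /ltW /(polyrcf.poly_ivt (ltW xw)) [y hy ry]; exists y; split=> //.
  move: hy; rewrite in_itv /= => /andP[hy1 hy2].
  have yw : y < w.
    rewrite lt_neqAle hy2 andbT; apply: contraTneq ry => ->.
    by rewrite rootE -sgr_eq0 sHw sgr_eq0.
  move=> z; rewrite /btw => /orP[] /andP[h1 h2]; apply: nEc; lra.
-
  have [w [wx nrE gw sHw]] := left_end x ht ht'.
  have nEc : forall z, w < z -> z <= x -> ~~ root E z.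
    move=> z h1; rewrite le_eqVlt => /orP[/eqP -> //|] h2; exact: nrE.
  have nrg : {in `[w, x[, noroot g}.
    move=> z; rewrite in_itv /= => /andP[h1 h2].
    move: h1; rewrite le_eqVlt => /orP[/eqP <-|h1]; first by rewrite rootE.
    apply/negP => rz; apply: (AMO ht h2 rz rx) => u hu1 hu2.
    by apply: nEc => //; exact: lt_le_trans h1 hu1.
  have sgw := sign_left wx rx dx nrg.
  have : H.[w] * H.[x] < 0.
    have hh := gtr0_sg hs; rewrite sgrM in hh.
    by rewrite -sgr_cp0 sgrM sHw -/g sgw mulNr [_ * Num.sg H.[x]]mulrC hh.
  move=> /ltW /(polyrcf.poly_ivt (ltW wx)) [y hy ry]; exists y; split=> //.
  move: hy; rewrite in_itv /= => /andP[hy1 hy2].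
  have wy : w < y.
    rewrite lt_neqAle hy1 andbT; apply: contraTneq ry => <-.
    by rewrite rootE -sgr_eq0 sHw sgr_eq0.
  move=> z; rewrite /btw => /orP[] /andP[h1 h2]; apply: nEc; lra.
Qed.

Lemma INJ t x1 x2 y : alpha < t -> root (G t) x1 -> root (G t) x2 ->
  (forall z, btw x1 y z -> ~~ root E z) -> (forall z, btw x2 y z -> ~~ root E z) ->
  x1 = x2.
Proof.
move=> ht r1 r2 h1 h2.
have key : forall u v, root (G t) u -> root (G t) v ->
    (forall z, btw u y z -> ~~ root E z) -> (forall z, btw v y z -> ~~ root E z) ->
    u < v -> False.
  move=> u v ru rv hu hv uv; apply: (AMO ht uv ru rv) => z zu zv.
  case: (lerP z y) => zy.
  - by apply: hu; rewrite /btw zu zy.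
  - by apply: hv; rewrite /btw (ltW zy) zv orbT.
case: (ltgtP x1 x2) => // h.
- by case: (key _ _ r1 r2 h1 h2 h).
- by case: (key _ _ r2 r1 h2 h1 h).
Qed.

End Abstract.

Lemma mapC_hornerX (A : nzRingType) (p : {poly A}) : (map_poly polyC p).['X] = p.
Proof.
elim/poly_ind: p => [|p c IH]; first by rewrite map_poly0 horner0.
by rewrite rmorphD rmorphM /= map_polyX map_polyC hornerD hornerMX hornerC IH.
Qed.

Section Bez.
Variable A : idomainType.
Variables f1 f2 : {poly A}.
Let N := map_poly polyC f1 * f2%:P - f1%:P * map_poly polyC f2.

Lemma bezout_polyE : bezout_poly f1 f2 * ('X - ('X)%:P) = N.
Proof.
have : root N 'X.
  by rewrite /N rootE hornerD hornerN !hornerM !hornerC !mapC_hornerX mulrC subrr.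
case/factor_theorem => B hB.
by rewrite /bezout_poly -/N hB Pdiv.IdomainMonic.mulpK ?monicXsubC.
Qed.
End Bez.

Lemma Pv_root (R : rcfType) n s (v : 'I_s.+1 -> R) xi z : (0 < n)%N ->
  (size (fv_at n v xi) <= n.+1)%N ->
  root (fv_at n v xi) z -> root (fv_at n v xi)^`() z -> root (Pv n v) xi.
Proof.
move=> n0 sz rz rz'.
set f := fv n v.
have gdef : fv_at n v xi = map_poly (horner_eval xi) f by [].
rewrite gdef in sz rz rz'.
set g := map_poly (horner_eval xi) f in sz rz rz'.
pose B0 : {poly {poly {poly R}}} := bezout_poly f f^`().
have bE : B0 * ('X - ('X)%:P) =
   map_poly polyC f * (f^`())%:P - f%:P * map_poly polyC f^`() :> {poly {poly {poly R}}}
   := bezout_polyE f f^`().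
have EB : map_poly (map_poly (horner_eval xi)) B0 * ('X - ('X)%:P) =
    map_poly polyC g * (g^`())%:P - g%:P * map_poly polyC g^`().
  have e : forall p : {poly {poly R}},
      map_poly (map_poly (horner_eval xi)) (map_poly polyC p) = map_poly polyC (map_poly (horner_eval xi) p).
    move=> p; rewrite -!map_poly_comp; apply: eq_map_poly => c /=; by rewrite map_polyC.
  have h := congr1 (map_poly (map_poly (horner_eval xi))) bE.
  rewrite rmorphM !rmorphB !rmorphM /= !map_polyX !map_polyC /= !map_polyX !e -deriv_map in h.
  exact: h.
set B := map_poly _ B0 in EB.
have Bz : B.[z%:P] = 0.
  have := congr1 (horner^~ z%:P) EB.
  rewrite /= hornerM !hornerE.
  have hm : forall p : {poly R}, (map_poly polyC p).[z%:P] = (p.[z])%:P.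
    by move=> p; rewrite -horner_map.
  rewrite !hm (rootP rz) (rootP rz') !mul0r mulr0 subrr.
  move/eqP; rewrite mulf_eq0 => /orP[/eqP //|].
  rewrite subr_eq0 => /eqP/(congr1 (size : {poly R} -> nat)).
  by rewrite size_polyC size_polyX; case: (z != 0).
have sizeB : (size B <= n)%N.
  have [->|Bn0] := eqVneq B 0; first by rewrite size_poly0.
  have := congr1 (size : {poly {poly R}} -> nat) EB.
  rewrite size_Mmonic ?monicXsubC // size_XsubC addn2 /= => e.
  rewrite -ltnS e.
  apply: (leq_trans (size_polyD _ _)); rewrite size_polyN geq_max.
  have sg' : (size g^`() <= n.+1)%N by rewrite size_deriv (leq_trans (leq_pred _) sz).
  apply/andP; split; apply: (leq_trans (size_polyMleq _ _)); rewrite !size_map_polyC.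
  - move: (size_polyC_leq1 g^`()); case: (size (g^`())%:P) => [|[|//]] _; rewrite ?addn0 ?addn1 //=.
    exact: leq_trans (leq_pred _) sz.
  - rewrite addnC; move: (size_polyC_leq1 g); case: (size g%:P) => [|[|//]] _; rewrite ?addn0 ?addn1 //=.
    exact: leq_trans (leq_pred _) sg'.
rewrite /Pv -/f rootE.
have -> : (\det (bezout_mx n f f^`())).[xi] = (horner_eval xi) (\det (bezout_mx n f f^`())) by [].
rewrite -det_map_mx.
have i0lt : (n.-1 < n)%N by rewrite prednK.
apply/det0P; exists (\row_(i < n) z ^+ (n - i.+1)).
  apply/eqP => /rowP /(_ (Ordinal i0lt)); rewrite !mxE /= prednK // subnn expr0 => /eqP.
  by rewrite oner_eq0.
apply/rowP => j; rewrite !mxE.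
transitivity ((B.[z%:P])`_(n - j.+1)); last by rewrite Bz coef0.
rewrite (horner_coef_wide _ sizeB) coef_sum.
rewrite (reindex_inj rev_ord_inj) /=; apply: eq_bigr => i _.
rewrite !mxE -rmorphXn coefMC mulrC /B !coef_map /=.
have e : (n - (n - i.+1).+1)%N = i by have := ltn_ord i; lia.
by rewrite e.
Qed.

Lemma list_map (R : eqType) (P1 P2 : pred R) (rel : R -> R -> Prop) :
  (forall x, P1 x -> exists y, P2 y /\ rel x y) ->
  (forall x1 x2 y, P1 x1 -> P1 x2 -> rel x1 y -> rel x2 y -> x1 = x2) ->
  forall r1, uniq r1 -> (forall x, x \in r1 -> P1 x) ->
  exists r2, [/\ uniq r2, (forall y, y \in r2 -> P2 y), size r2 = size r1 &
                 (forall y, y \in r2 -> exists x, x \in r1 /\ rel x y)].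
Proof.
move=> hex hinj; elim=> [|x r1 IH] /=.
  by move=> _ _; exists [::]; split=> // y; rewrite in_nil.
move=> /andP[xr1 ur1] h.
have h' : forall z, z \in r1 -> P1 z by move=> z hz; apply: h; rewrite in_cons hz orbT.
have [r2 [u2 p2 s2 b2]] := IH ur1 h'.
have [y [py rxy]] := hex x (h x (mem_head _ _)).
exists (y :: r2); split.
- rewrite /= u2 andbT; apply/negP => yr2.
  have [x' [x'r1 rx'y]] := b2 y yr2.
  have exx : x = x' by apply: (hinj _ _ y) => //; [exact: h (mem_head _ _) | apply: h; by rewrite in_cons x'r1 orbT].
  by move: xr1; rewrite exx x'r1.
- by move=> z; rewrite in_cons => /orP[/eqP -> //|]; exact: p2.
- by rewrite /= s2.
- move=> z; rewrite in_cons => /orP[/eqP ->|zr2]; first by exists x; rewrite mem_head.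
  by have [x' [h1 h2]] := b2 z zr2; exists x'; rewrite in_cons h1 orbT.
Qed.

Lemma count_le (R : eqType) (P1 P2 : pred R) (rel : R -> R -> Prop) r1 r2 :
  (forall x, P1 x -> exists y, P2 y /\ rel x y) ->
  (forall x1 x2 y, P1 x1 -> P1 x2 -> rel x1 y -> rel x2 y -> x1 = x2) ->
  uniq r1 -> (forall x, P1 x = (x \in r1)) -> (forall x, P2 x = (x \in r2)) ->
  (size r1 <= size r2)%N.
Proof.
move=> hex hinj u1 h1 h2.
have [r [ur pr sr _]] := list_map hex hinj u1 (fun x hx => etrans (h1 x) hx).
rewrite -sr; apply: (uniq_leq_size ur) => y yr; rewrite -h2; exact: pr.
Qed.

Lemma DN0 (R : rcfType) (k : nat) (q : {poly R}) : (0 < k)%N -> q != 0 -> (size q <= k)%N ->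
  D ('X^k) q != 0.
Proof.
move=> k0 q0 sq.
set d := (size q).-1.
have dk : (d < k)%N by rewrite /d; move: (size_poly_gt0 q); rewrite q0; lia.
apply/negP => /eqP D0.
have := congr1 (fun p : {poly R} => p`_(k.-1 + d)) D0.
rewrite /D /= coefB derivXn mulrnAl coefMn coefXnM coef0.
rewrite ltnNge leq_addr /= addKn coefXnM.
have lc : q`_d = lead_coef q by [].
case: (ltnP (k.-1 + d) k) => hd.
  have d0 : d = 0%N by lia.
  rewrite subr0 lc => /eqP; rewrite mulrn_eq0 lead_coef_eq0 (negPf q0) orbF.
  by rewrite -(prednK k0).
have -> : (k.-1 + d - k = d.-1)%N by lia.
rewrite coef_deriv.
have d0 : (0 < d)%N by lia.
rewrite prednK // lc -mulrnBr ?(ltnW dk) //.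
move/eqP; rewrite mulrn_eq0 lead_coef_eq0 (negPf q0) orbF; lia.
Qed.

Lemma fv_atE (R : rcfType) n s (v : 'I_s.+1 -> R) xi :
  fv_at n v xi = 'X^n + xi *: \sum_(k < s.+1) v k *: 'X^k.
Proof.
have -> : fv_at n v xi = map_poly (horner_eval xi) (fv n v) by [].
rewrite /fv rmorphD rmorph_sum /= rmorphXn /= map_polyX scaler_sumr; congr (_ + _).
apply: eq_bigr => k _; rewrite rmorphM /= rmorphXn /= map_polyX map_polyC /=.
by rewrite /horner_eval /= hornerM hornerC hornerX scalerA mul_polyC mulrC.
Qed.

Lemma size_qv (R : rcfType) s (v : 'I_s.+1 -> R) :
  (size (\sum_(k < s.+1) v k *: 'X^k)%R <= s.+1)%N.
Proof.
apply: (big_ind (fun p : {poly R} => (size p <= s.+1)%N)).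
- by rewrite size_poly0.
- by move=> p1 p2 h1 h2; apply: (leq_trans (size_polyD _ _)); rewrite geq_max h1 h2.
- move=> k _; apply: (leq_trans (size_scale_leq _ _)); rewrite size_polyXn; exact: ltn_ord.
Qed.

Unset Implicit Arguments. Set Strict Implicit.

Theorem lemma5p5 (R : rcfType) (n s : nat) (v : 'I_s.+1 -> R)
  (hs : (1 <= s)%N) (hsn : (s < n)%N)
  (hP : Pv n v != 0)
  (alpha : R) (halpha : root (Pv n v) alpha)
  (halpha_max : forall beta : R, root (Pv n v) beta -> beta <= alpha)
  (gamma0 : nat) (rho0 : R) (hrho0 : alpha < rho0)
  (hgamma : forall xi : R, rho0 < xi -> num_real_roots_eq (fv_at n v xi) gamma0) :
  forall xi : R, alpha < xi -> num_real_roots_eq (fv_at n v xi) gamma0.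
Proof.
move=> xi hxi.
set qv := \sum_(k < s.+1) v k *: 'X^k.
have fvE : forall t, fv_at n v t = 'X^n + t *: qv by move=> t; rewrite fv_atE.
have n0 : (0 < n)%N by lia.
have szq : (size qv <= n)%N := leq_trans (size_qv v) hsn.
have szsc : forall t, (size (t *: qv) < size ('X^n : {poly R}))%N.
  by move=> t; rewrite size_polyXn ltnS (leq_trans (size_scale_leq _ _) szq).
have szf : forall t, (size (fv_at n v t) <= n.+1)%N.
  by move=> t; rewrite fvE size_polyDl ?szsc // size_polyXn.
have fN0 : forall t, fv_at n v t != 0.
  by move=> t; rewrite -size_poly_eq0 fvE size_polyDl ?szsc // size_polyXn.
have Hroot : forall t z, root (fv_at n v t) z -> root (fv_at n v t)^`() z -> t <= alpha.
  by move=> t z h1 h2; apply: halpha_max; exact: (Pv_root n0 (szf t) h1 h2).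
have Xr : root ('X^n : {poly R}) 0 /\ root ('X^n : {poly R})^`() 0.
  rewrite derivXn !rootE hornerMn !hornerXn !expr0n.
  have n1 : (0 < n.-1)%N by lia.
  rewrite (negbTE (lt0n_neq0 n0)) (negbTE (lt0n_neq0 n1)).
  by rewrite /= mul0rn.
have a0 : 0 <= alpha.
  by apply: (Hroot 0 0); rewrite fvE scale0r addr0; case: Xr.
have qv0 : qv != 0.
  apply/negP => /eqP q0.
  have : alpha + 1 <= alpha by apply: (Hroot _ 0); rewrite fvE q0 scaler0 addr0; case: Xr.
  lra.
have [m [qt qt0 qE]] := multiplicity_XsubC qv 0.
rewrite qv0 /= in qt0.
rewrite polyC0 subr0 in qE.
have qtN0 : qt != 0 by apply: contraNneq qt0 => ->; rewrite root0.
have szqv : size qv = (m + size qt)%N by rewrite qE size_mulXn.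
have sqt : (0 < size qt)%N by rewrite size_poly_gt0.
have mn : (m < n)%N by lia.
set k := (n - m)%N.
have k0 : (0 < k)%N by rewrite /k; lia.
have szk : (size qt <= k)%N by rewrite /k; lia.
set a : {poly R} := 'X^k.
have gE : forall t, fv_at n v t = 'X^m * G a qt t.
  move=> t; rewrite fvE qE /G /a mulrDr -exprD subnKC ?(ltnW mn) //; congr (_ + _).
  by rewrite -scalerAr mulrC.
have qa_cop : forall z, root qt z -> ~~ root a z.
  move=> z rz; apply/negP; rewrite /a rootE hornerXn expf_eq0 => /andP[_ /eqP z0].
  by move: qt0; rewrite -z0 rz.
have size_qa : (size qt < size a)%N by rewrite /a size_polyXn ltnS.
have Hdbl : forall t z, root (G a qt t) z -> root (G a qt t)^`() z -> t <= alpha.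
  move=> t z h1 h2; apply: (Hroot t z); rewrite gE.
  - by rewrite rootM h1 orbT.
  - by rewrite derivM rootE hornerD !hornerM (rootP h1) (rootP h2) !mulr0 addr0.
have EN0 : E a qt != 0 by rewrite /E mulf_neq0 // DN0.
have Gt0 : forall t, 0 < t -> ~~ root (G a qt t) 0.
  move=> t t0.
  have e0 : (0 : R) ^+ k = 0 by rewrite expr0n (negbTE (lt0n_neq0 k0)).
  by rewrite rootE /G /a hornerD hornerXn e0 add0r hornerZ mulf_neq0 // gt_eqF.
pose rel := fun x y : R => (root ('X^m : {poly R}) x /\ y = x) \/
  (~~ root ('X^m : {poly R}) x /\ ~~ root ('X^m : {poly R}) y /\
     forall z, btw x y z -> ~~ root (E a qt) z).
have hex : forall t t', alpha < t -> alpha < t' -> forall x, root (fv_at n v t) x ->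
    exists y, root (fv_at n v t') y /\ rel x y.
  move=> t t' ht ht' x; rewrite gE rootM.
  have [hX|hX] := boolP (root ('X^m : {poly R}) x).
    by move=> _; exists x; split; [rewrite gE rootM hX | left].
  rewrite /= => hx.
  have [y [ry hy]] := EX qa_cop size_qa Hdbl EN0 ht ht' hx.
  exists y; split; first by rewrite gE rootM ry orbT.
  right; split=> //; split=> //.
  apply/negP => hXy.
  have y0 : y = 0 by move: hXy; rewrite rootE hornerXn expf_eq0 => /andP[_ /eqP].
  by move: (Gt0 t' (le_lt_trans a0 ht')); rewrite -y0 ry.
have hinj : forall t, alpha < t -> forall x1 x2 y, root (fv_at n v t) x1 ->
    root (fv_at n v t) x2 -> rel x1 y -> rel x2 y -> x1 = x2.
  move=> t ht x1 x2 y r1 r2 [[h1 e1]|[h1 [h1' b1]]] [[h2 e2]|[h2 [h2' b2]]].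
  - by rewrite -e1 -e2.
  - by move: h2'; rewrite e1 h1.
  - by move: h1'; rewrite e2 h2.
  - have g1 : root (G a qt t) x1 by move: r1; rewrite gE rootM (negPf h1).
    have g2 : root (G a qt t) x2 by move: r2; rewrite gE rootM (negPf h2).
    exact: (INJ size_qa Hdbl ht g1 g2 b1 b2).
set xi2 := Num.max rho0 xi + 1.
have hm : rho0 <= Num.max rho0 xi by rewrite le_max lexx.
have h2 : rho0 < xi2 by rewrite /xi2; lra.
have hxi2 : alpha < xi2 by lra.
have [r2 [u2 e2 s2]] := hgamma xi2 h2.
set p := fv_at n v xi.
have ron := roots_on_rootsR (fN0 xi).
have e1 : forall x, root p x = (x \in rootsR p) by move=> x; rewrite -ron in_itv.
have u1 : uniq (rootsR p) := uniq_roots _ _ _.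
exists (rootsR p); split=> //.
apply/eqP; rewrite -s2 eqn_leq; apply/andP; split.
- exact: (count_le (hex xi xi2 hxi hxi2) (hinj xi hxi) u1 e1 e2).
- exact: (count_le (hex xi2 xi hxi2 hxi) (hinj xi2 hxi2) u2 e2 e1).
Qed.
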